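(* Let $\beta,\psi_0,M$ be real constants, $\kappa>0$, $p\in\mathbb{R}\setminus\{0,-\tfrac12\}$, and let $I\subset(0,\infty)$ be an open interval on which $f(r):=\frac{1}{2p+1}-2Mr^{-2p-1}>0$. Set $\tilde{\mathcal{C}}\equiv0$, $\mathcal{V}\equiv0$, $\mathcal{A}(\psi)=-\frac{p\beta}{4}\psi^2$, and $$A(r)=\sqrt{f(r)},\qquad C(r)=1,\qquad \psi(r)=\psi_0r^p .$$ Then $E^{(2)}_{tt}=E^{(2)}_{rr}=E^{(2)}_{\vartheta\vartheta}=E^{(2)}_{\psi}=0$ hold on $I$, i.e. the metric ${\rm d}s^2=f\,{\rm d}t^2-f^{-1}{\rm d}r^2-r^2{\rm d}\Omega^2$ with this scalar field solves the complex-tetrad vacuum field equations.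
   Context: Metric ansatz ${\rm d}s^2=A(r)^2{\rm d}t^2-\frac{C(r)^2}{A(r)^2}{\rm d}r^2-r^2{\rm d}\Omega^2$, scalar field $\psi=\psi(r)$. Primes on $A,C,\psi$ are $r$-derivatives; $\mathcal{A}',\tilde{\mathcal{C}}',\tilde{\mathcal{C}}'',\mathcal{V}'$ are $\psi$-derivatives evaluated at $\psi(r)$. The complex-tetrad reduced vacuum field equations of the scalar-torsion theory are: $E^{(2)}_{tt}:\ 0=\mathcal{A}\frac{A^2(-2rACA'-A^2(C-2rC')+C^3)}{r^2C^3}+\tilde{\mathcal{C}}'\frac{A^3(C(A'\psi'+A\psi'')-AC'\psi')}{C^3}-\frac{2A^4\psi'\mathcal{A}'}{rC^2}+\frac{A^4\psi'^2\tilde{\mathcal{C}}''}{C^2}-\frac{\beta A^4\psi'^2}{2C^2}+\kappa^2A^2\mathcal{V}$; $E^{(2)}_{rr}:\ 0=\frac{\mathcal{A}(-2rAA'-A^2+C^2)}{r^2A^2}+\big(\frac{A'}{A}+\frac2r\big)\psi'\tilde{\mathcal{C}}'+\frac{\kappa^2C^2\mathcal{V}}{A^2}+\frac12\beta\psi'^2$; $E^{(2)}_{\vartheta\vartheta}:\ 0=-\mathcal{A}'\frac{A(rA'+A)\psi'}{rC^2}+\tilde{\mathcal{C}}'\frac{A(C(A'\psi'+A\psi'')-AC'\psi')}{C^3}+\frac{\mathcal{A}(-rCA'^2+A(rA'C'-C(rA''+2A'))+A^2C')}{rC^3}+\frac{A^2\psi'^2\tilde{\mathcal{C}}''}{C^2}-\frac{\beta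 A^2\psi'^2}{2C^2}+\kappa^2\mathcal{V}$; $E^{(2)}_{\psi}:\ 0=\frac{(2rAA'+A^2+C^2)\mathcal{A}'}{r^2C^2}+\frac{\beta A(2rCA'\psi'+A(C(r\psi''+2\psi')-rC'\psi'))}{rC^3}+\frac{\tilde{\mathcal{C}}'(r^2CA'^2+rA(C(rA''+6A')-rA'C')+2A^2(C-rC'))}{r^2C^3}+\kappa^2\mathcal{V}'$. *)

(* Defs.v *)
From Stdlib Require Import Reals.
From Coquelicot Require Import Coquelicot.
Open Scope R_scope.

(* Reduced vacuum field equations of the scalar-torsion theory (complex tetrad),
   for metric functions A, C and scalar field psi (functions of r), and
   coupling functions Acal, Ct (= \tilde C), V (functions of psi).  Each definition is the right-hand side
   of the corresponding equation "0 = ...". *)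

Section FieldEqs.
Variables (Acal Ct V : R -> R) (kappa beta : R) (A C psi : R -> R).

Let A1 r := Derive A r.
Let A2 r := Derive (Derive A) r.
Let C1 r := Derive C r.
Let p1 r := Derive psi r.
Let p2 r := Derive (Derive psi) r.
Let Ac r := Acal (psi r).
Let Ac1 r := Derive Acal (psi r).
Let Ct1 r := Derive Ct (psi r).
Let Ct2 r := Derive (Derive Ct) (psi r).
Let Vv r := V (psi r).
Let V1 r := Derive V (psi r).

Definition E_tt (r : R) : R :=
  Ac r * (A r ^ 2 * (- 2 * r * A r * C r * A1 r - A r ^ 2 * (C r - 2 * r * C1 r)
                      + C r ^ 3) / (r ^ 2 * C r ^ 3))
  + Ct1 r * (A r ^ 3 * (C r * (A1 r * p1 r + A r * p2 r) - A r * C1 r * p1 r)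
             / C r ^ 3)
  - 2 * A r ^ 4 * p1 r * Ac1 r / (r * C r ^ 2)
  + A r ^ 4 * p1 r ^ 2 * Ct2 r / C r ^ 2
  - beta * A r ^ 4 * p1 r ^ 2 / (2 * C r ^ 2)
  + kappa ^ 2 * A r ^ 2 * Vv r.

Definition E_rr (r : R) : R :=
  Ac r * (- 2 * r * A r * A1 r - A r ^ 2 + C r ^ 2) / (r ^ 2 * A r ^ 2)
  + (A1 r / A r + 2 / r) * p1 r * Ct1 r
  + kappa ^ 2 * C r ^ 2 * Vv r / A r ^ 2
  + / 2 * beta * p1 r ^ 2.

Definition E_thth (r : R) : R :=
  - Ac1 r * (A r * (r * A1 r + A r) * p1 r / (r * C r ^ 2))
  + Ct1 r * (A r * (C r * (A1 r * p1 r + A r * p2 r) - A r * C1 r * p1 r)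
             / C r ^ 3)
  + Ac r * (- r * C r * A1 r ^ 2
            + A r * (r * A1 r * C1 r - C r * (r * A2 r + 2 * A1 r))
            + A r ^ 2 * C1 r) / (r * C r ^ 3)
  + A r ^ 2 * p1 r ^ 2 * Ct2 r / C r ^ 2
  - beta * A r ^ 2 * p1 r ^ 2 / (2 * C r ^ 2)
  + kappa ^ 2 * Vv r.

Definition E_psi (r : R) : R :=
  (2 * r * A r * A1 r + A r ^ 2 + C r ^ 2) * Ac1 r / (r ^ 2 * C r ^ 2)
  + beta * A r * (2 * r * C r * A1 r * p1 r
                  + A r * (C r * (r * p2 r + 2 * p1 r) - r * C1 r * p1 r))
    / (r * C r ^ 3)
  + Ct1 r * (r ^ 2 * C r * A1 r ^ 2
             + r * A r * (C r * (r * A2 r + 6 * A1 r) - r * A1 r * C1 r)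
             + 2 * A r ^ 2 * (C r - r * C1 r)) / (r ^ 2 * C r ^ 3)
  + kappa ^ 2 * V1 r.

End FieldEqs.

(* Main.v *)
Require Import Defs.
From Stdlib Require Import Reals Lra.
From Coquelicot Require Import Coquelicot.
Open Scope R_scope.

Theorem mainTheorem7 (beta psi0 M kappa p : R) (a : R) (b : Rbar) :
  0 < kappa -> p <> 0 -> p <> - / 2 ->
  0 <= a -> Rbar_lt a b ->
  (forall r, a < r -> Rbar_lt r b ->
     0 < / (2 * p + 1) - 2 * M * Rpower r (- 2 * p - 1)) ->
  let f := fun r => / (2 * p + 1) - 2 * M * Rpower r (- 2 * p - 1) in
  let Acal := fun x : R => - (p * beta / 4) * x ^ 2 in
  let Ct := fun _ : R => 0 in
  let V := fun _ : R => 0 in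
  let A := fun r => sqrt (f r) in
  let C := fun _ : R => 1 in
  let psi := fun r => psi0 * Rpower r p in
  forall r, a < r -> Rbar_lt r b ->
    E_tt Acal Ct V kappa beta A C psi r = 0 /\
    E_rr Acal Ct V kappa beta A C psi r = 0 /\
    E_thth Acal Ct V kappa beta A C psi r = 0 /\
    E_psi Acal Ct V kappa beta A C psi r = 0.
Proof.
  intros Hk Hp0 Hp2 Ha Hab Hf f Acal Ct V A C psi r Har Hrb.
  unfold Rpower in *.
  assert (Hloc : locally r (fun y => a < y /\ Rbar_lt y b)).
  { apply (locally_open (fun y : R => Rbar_lt a y /\ Rbar_lt y b)).
    - apply open_and; [apply open_Rbar_gt | apply open_Rbar_lt].
    - tauto.
    - simpl; tauto. }
  set (q := -2*p-1) in *.
  assert (HA1 : forall y, a < y -> Rbar_lt y b ->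
    Derive A y = (2*M*(2*p+1)*exp (q * ln y) / y) / (2 * sqrt (f y))).
  { intros y H1 H2. apply is_derive_unique. subst A f.
    specialize (Hf y H1 H2). auto_derive.
    - split; [lra|]. split; [|exact I]. exact Hf.
    - unfold Rminus, q. field. split; [lra|]. apply Rgt_not_eq, sqrt_lt_R0. unfold Rminus in Hf. exact Hf. }
  assert (Hp1 : forall y, a < y -> Derive psi y = psi0 * (p * exp (p * ln y) / y)).
  { intros y H1. apply is_derive_unique. subst psi. auto_derive.
    - lra.
    - field. lra. }
  assert (HA2 : Derive (Derive A) r =
     Derive (fun y => (2*M*(2*p+1)*exp (q * ln y) / y) / (2 * sqrt (f y))) r).
  { apply Derive_ext_loc. eapply filter_imp; [|exact Hloc]; intros y [H1 H2]; simpl. now apply HA1. }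
  assert (Hpp : Derive (Derive psi) r = Derive (fun y => psi0 * (p * exp (p * ln y) / y)) r).
  { apply Derive_ext_loc. eapply filter_imp; [|exact Hloc]; intros y [H1 H2]; simpl. now apply Hp1. }
  assert (HA2' : Derive (fun y => (2*M*(2*p+1)*exp (q * ln y) / y) / (2 * sqrt (f y))) r =
     (2*M*(2*p+1)*(q-1)*exp (q * ln r) / (r*r)) / (2 * sqrt (f r))
     - (2*M*(2*p+1)*exp (q * ln r) / r) ^2 / (4 * sqrt (f r) ^ 3)).
  { apply is_derive_unique. unfold f. specialize (Hf r Har Hrb). unfold Rminus in Hf |- *.
    assert (HS: 0 < sqrt (/ (2 * p + 1) + - (2 * M * exp (q * ln r)))) by (apply sqrt_lt_R0; exact Hf).
    auto_derive.
    - repeat split; try lra; try exact I.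
    - unfold q. field. split; [lra | apply Rgt_not_eq; exact HS]. }
  assert (Hpp' : Derive (fun y => psi0 * (p * exp (p * ln y) / y)) r =
    psi0 * p * (p - 1) * exp (p * ln r) / (r * r)).
  { apply is_derive_unique. auto_derive.
    - repeat split; try lra; exact I.
    - field. lra. }
  specialize (HA1 r Har Hrb). specialize (Hp1 r Har).
  rewrite Hpp' in Hpp. rewrite HA2' in HA2.
  unfold E_tt, E_rr, E_thth, E_psi.
  rewrite HA1, Hp1, HA2, Hpp.
  assert (HC: forall y, Derive C y = 0) by (intro; unfold C; apply Derive_const).
  assert (HCt: forall y, Derive Ct y = 0) by (intro; unfold Ct; apply Derive_const).
  assert (HV: forall y, Derive V y = 0) by (intro; unfold V; apply Derive_const).
  assert (HCt2: forall y, Derive (Derive Ct) y = 0).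
  { intro. rewrite (Derive_ext _ (fun _ => 0)) by apply HCt. apply Derive_const. }
  assert (HAc : forall x, Derive Acal x = - (p*beta/2) * x).
  { intro x. apply is_derive_unique. subst Acal. auto_derive; [exact I | field]. }
  rewrite ?HC, ?HCt, ?HV, ?HCt2, ?HAc.
  subst Acal Ct V A C psi. cbv beta.
  specialize (Hf r Har Hrb). fold (f r) in Hf |- *.
  set (S := sqrt (f r)).
  assert (HS0 : 0 < S) by (apply sqrt_lt_R0, Hf).
  assert (HSS : S * S = f r) by (apply sqrt_sqrt; lra).
  set (e := exp (p * ln r)).
  assert (He : 0 < e) by apply exp_pos.
  assert (Hu : exp (q * ln r) = / (e * e * r)).
  { unfold q, e. replace ((-2*p-1) * ln r) with (- (p * ln r + p * ln r + ln r)) by ring.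
    rewrite exp_Ropp, !exp_plus, exp_ln by lra. reflexivity. }
  rewrite Hu. subst f. cbv beta in HSS. rewrite Hu in HSS.
  assert (H2p : 2 * p + 1 <> 0) by lra.
  assert (HM : M = (/ (2*p+1) - S*S) * (e*e*r) / 2).
  { rewrite HSS. field. split; lra. }
  clearbody S e. rewrite HM. unfold q.
  repeat split; field; repeat split; lra.
Qed.
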